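(* Let $K$ be a non-planar continuum. Then $T(x)\subset S(x)$ for every $x\in K$.
   Context: For a compactum $K$ and $A\subset K$, $T(A)$ is the set of all $y\in K$ for which there do not exist both an open set $Q\subset K$ and a continuum $W$ with $y\in Q\subset W\subset K\setminus A$; $T(x)=T(\{x\})$. $S(x)$ is the set of all $y\in K$ for which there do NOT exist two disjoint open sets $U_x,U_y\subset K$ with $x\in U_x$, $y\in U_y$ such that $K\setminus(U_x\cup U_y)$ has at most finitely many components intersecting both $\partial U_x$ and $\partial U_y$. *)

(* Defs.v *)
From HB Require Import structures.
From mathcomp Require Import all_boot all_order all_algebra.
From mathcomp Require Import all_classical all_reals all_analysis.
Set Implicit Arguments. Unset Strict Implicit. Unset Printing Implicit Defensive.
Import Order.TTheory GRing.Theory Num.Theory.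
Import numFieldTopology.Exports.
Local Open Scope classical_set_scope.

(* The compactum K is the whole (metric) space T.  Subsets of K are sets of T. *)

Definition is_continuum {T : topologicalType} (W : set T) : Prop :=
  W !=set0 /\ compact W /\ connected W.

Definition bdry {T : topologicalType} (U : set T) : set T :=
  closure U `&` ~` interior U.

Definition components {T : topologicalType} (A : set T) : set (set T) :=
  [set C | exists z, A z /\ C = connected_component A z].

Definition Tset {T : topologicalType} (A : set T) : set T :=
  [set y | ~ exists Q W : set T,
      [/\ open Q, is_continuum W, Q y, Q `<=` W & W `<=` ~` A]].

Definition Tpt {T : topologicalType} (x : T) : set T := Tset [set x].

Definition Spt {T : topologicalType} (x : T) : set T :=
  [set y | ~ exists Ux Uy : set T,
      [/\ open Ux /\ open Uy, Ux `&` Uy = set0, Ux x, Uy y &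
        finite_set [set C | components (~` (Ux `|` Uy)) C /\
                            C `&` bdry Ux !=set0 /\ C `&` bdry Uy !=set0]]].

Definition embedding {X Y : topologicalType} (f : X -> Y) : Prop :=
  [/\ injective f, continuous f &
      forall U : set X, open U ->
        exists V : set Y, open V /\ f @` U = f @` setT `&` V].

Definition planar (R : realType) (T : topologicalType) : Prop :=
  exists f : T -> (R * R)%type, embedding f.

(* Main.v *)
Require Import Defs.
From HB Require Import structures.
From mathcomp Require Import all_boot all_order all_algebra.
From mathcomp Require Import all_classical all_reals all_analysis.
Local Open Scope classical_set_scope.


Set Implicit Arguments.
Section Helpers.
Variable T : topologicalType.
Hypothesis hT : hausdorff_space T.
Hypothesis cT : compact [set: T].

Lemma fip_sub (G : set (set T)) (G0 : set T) (V : set T) :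
  (forall A, G A -> closed A) ->
  (forall A B, G A -> G B -> G (A `&` B)) -> G G0 -> open V ->
  (forall p, (forall A, G A -> A p) -> V p) ->
  exists2 A, G A & A `<=` V.
Proof.
move=> Gcl GI GG0 oV hV; apply: contrapT => hN.
have ne : forall A, G A -> (A `&` ~` V) !=set0.
  move=> A GA; apply/set0P/negP => /eqP AV; apply: hN; exists A => // p Ap.
  by apply: contrapT => nV; have : (A `&` ~` V) p by []; rewrite AV.
pose F := filter_from G (fun A => A `&` ~` V).
have FF : Filter F.
  apply: filter_from_filter; first by exists G0.
  move=> A B GA GB; exists (A `&` B); first exact: GI.
  by move=> p [[Ap Bp] nV].
have PF : ProperFilter F by apply: filter_from_proper.
have [p [_ cl]] := @cT F PF filterT.
have inA : forall A, G A -> (A `&` ~` V) p.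
  move=> A GA; have clA : closed (A `&` ~` V).
    by apply: closedI; [exact: Gcl | exact: open_closedC].
  rewrite ((closure_id _).1 clA) => B nB.
  by apply: cl => //; exists A.
have := inA _ GG0; move=> [_ nV]; apply: nV; apply: hV => A GA.
by case: (inA _ GA).
Qed.

Lemma sep_closed (A1 A2 : set T) : closed A1 -> closed A2 ->
  A1 `&` A2 = set0 ->
  exists U1 U2 : set T, [/\ open U1, open U2, A1 `<=` U1, A2 `<=` U2 &
     U1 `&` U2 = set0].
Proof.
move=> c1 c2 d12.
have N := compact_normal hT cT c1.
have sn : set_nbhs A1 (~` A2).
  apply/set_nbhsP; exists (~` A2); split => //; first exact: closed_openC.
  by move=> p A1p A2p; have : (A1 `&` A2) p by []; rewrite d12.
have [U sU clU] := N _ sn.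
have [C [ oC A1C CU]] := (set_nbhsP _ _).1 sU.
exists C, (~` closure C); split => //.
- exact/closed_openC/closed_closure.
- move=> p A2p clp; have := clU p (closureS CU clp); by [].
- by apply/seteqP; split => // p [Cp]; apply; exact: subset_closure.
Qed.

Lemma quasi_comp (E B : set T) (a : T) : closed E -> E a -> closed B ->
  connected_component E a `&` B = set0 ->
  exists O : set T, [/\ open O, O a, closed (E `&` O) & E `&` O `&` B = set0].
Proof.
move=> cE Ea cB dB.
pose G := [set A : set T | exists O, [/\ open O, A = E `&` O, closed A & A a]].
have Gcl : forall A, G A -> closed A by move=> A [W0 [_ _ cA _]].
have GI : forall A1 A2, G A1 -> G A2 -> G (A1 `&` A2).
  move=> A1 A2 [Y1 [ o1 e1 c1 a1]] [Y2 [ o2 e2 c2 a2]]; exists (Y1 `&` Y2); split.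
  - exact: openI.
  - by rewrite e1 e2; apply/seteqP; split => p; [move=> [[? ?] [? ?]] | move=> [? [? ?]]].
  - by rewrite e1 e2 in c1 c2 *; exact: closedI.
  - by split.
have GE : G E by exists setT; split => //; [exact: openT | rewrite setIT].
pose Q := [set p | forall A, G A -> A p].
have Qa : Q a by move=> A [W0 [_ _ _ hA]].
have QE : Q `<=` E by move=> p /(_ _ GE).
have Qcl : closed Q.
  have -> : Q = \bigcap_(A in G) A by apply/seteqP; split => p hp.
  by apply: closed_bigI.
have split0 : forall A1 A2 : set T, closed A1 -> closed A2 -> A1 `&` A2 = set0 ->
    Q = A1 `|` A2 -> A1 a -> A2 = set0.
  move=> A1 A2 c1 c2 d12 QA A1a.
  have [U1 [U2 [ o1 o2 s1 s2 dU]]] := sep_closed c1 c2 d12.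
  have hU : forall p, (forall A, G A -> A p) -> (U1 `|` U2) p.
    move=> p Qp; have : (A1 `|` A2) p by rewrite -QA.
    by case => ?; [left; exact: s1 | right; exact: s2].
  have [A GA AU] := @fip_sub G E (U1 `|` U2) Gcl GI GE (openU o1 o2) hU.
  case: GA => Oa [ oO AE cA Aa].
  have G' : G (E `&` (Oa `&` U1)).
    exists (Oa `&` U1); split => //; first exact: openI.
    - have -> : E `&` (Oa `&` U1) = A `&` ~` U2.
        rewrite AE; apply/seteqP; split.
        + move=> p [Ep [ Op U1p]]; split; first by [].
          move=> U2p; have : (U1 `&` U2) p by []. by rewrite dU.
        + move=> p [[Ep Op] nU2]; split => //; split => //.
          have : (U1 `|` U2) p by apply: AU; rewrite AE.
          by case.
      by apply: closedI => //; exact: open_closedC.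
    - by split; [exact: QE|split; [rewrite AE in Aa; case: Aa|exact: s1]].
  apply/seteqP; split => // p A2p.
  have Qp : Q p by rewrite QA; right.
  have [_ [_ U1p]] := Qp _ G'.
  have : (U1 `&` U2) p by split => //; exact: s2.
  by rewrite dU.
have Qconn : connected Q.
  move=> B' [b Bb] [C1 oC1 e1] [C2 cC2 e2].
  have cB' : closed B' by rewrite e2; exact: closedI.
  have cR : closed (Q `&` ~` C1) by apply: closedI => //; exact: open_closedC.
  have dR : B' `&` (Q `&` ~` C1) = set0.
    apply/seteqP; split => // p [+ [_ nC]]; rewrite e1 => -[_ ?]; exact: nC.
  have QU : Q = B' `|` (Q `&` ~` C1).
    apply/seteqP; split => p; last by case => [Bp|[]]; [move: Bp; rewrite e1; case|].
    move=> Qp; have [C1p|nC1p] := pselect (C1 p); last by right.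
    by left; rewrite e1.
  have [B'a|nB'a] := pselect (B' a).
    have R0 := split0 _ _ cB' cR dR QU B'a.
    apply/seteqP; split; first by rewrite e1 => p [].
    move=> p Qp; have [C1p|nC1p] := pselect (C1 p); first by rewrite e1.
    by have : (Q `&` ~` C1) p by []; rewrite R0.
  have Ra : (Q `&` ~` C1) a by split => // C1a; apply: nB'a; rewrite e1.
  have dR' : (Q `&` ~` C1) `&` B' = set0 by rewrite setIC.
  have QU' : Q = (Q `&` ~` C1) `|` B' by rewrite setUC.
  have B0 := split0 _ _ cR cB' dR' QU' Ra.
  by move: Bb; rewrite B0.
have Qsub : Q `<=` connected_component E a by apply: connected_component_max.
have hV : forall p, (forall A, G A -> A p) -> (~` B) p.
  move=> p Qp Bp; have : (connected_component E a `&` B) p.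
    by split => //; apply: Qsub.
  by rewrite dB.
have [A [Y [ oY AE cA Aa]] AB] := @fip_sub G E (~` B) Gcl GI GE (closed_openC cB) hV.
exists Y; split => //.
- by rewrite AE in Aa; case: Aa.
- by rewrite -AE.
- by apply/seteqP; split => // p [Ap Bp]; rewrite -AE in Ap; exact: AB Ap Bp.
Qed.
Lemma bump (P E : set T) (p a : T) : connected P -> closed E ->
  E `<=` P -> P p -> ~ E p -> E a ->
  exists c, connected_component E a c /\ closure (P `&` ~` E) c.
Proof.
move=> cP cE EP Pp nEp Ea; apply: contrapT => hN.
set B := closure (P `&` ~` E).
have dB : connected_component E a `&` B = set0.
  by apply/seteqP; split => // c [h1 h2]; apply: hN; exists c.
have [Y [oY Ya cEY dEY]] := quasi_comp cE Ea (@closed_closure _ _) dB.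
have EYP : E `&` Y = P.
  apply: cP.
  - by exists a.
  - exists (Y `&` ~` B); first by apply: openI => //; exact/closed_openC/closed_closure.
    apply/seteqP; split.
    + move=> q [Eq Yq]; split; first exact: EP.
      split => // Bq; have : (E `&` Y `&` B) q by [].
      by rewrite dEY.
    + move=> q [Pq [Yq nBq]]; split => //; apply: contrapT => nEq.
      by apply: nBq; apply: subset_closure.
  - exists (E `&` Y) => //; apply/seteqP; split.
    + by move=> q [Eq Yq]; split => //; exact: EP.
    + by move=> q [].
by apply: nEp; have : P p by []; rewrite -EYP; case.
Qed.
End Helpers.

Theorem theorem9p7 (R : realType) (K : pseudoMetricType R)
  (hK : hausdorff_space K) (Kcpt : compact [set: K]) (Kconn : connected [set: K])
  (Kne : [set: K] !=set0) (Knp : ~ planar R K) :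
  forall x : K, Tpt x `<=` Spt x.
Proof.
move=> x y hy [Ux [Uy [[oUx oUy] dU Uxx Uyy fin]]].
set M := ~` Ux.
set F := ~` (Ux `|` Uy).
set P0 := connected_component M y.
set CC := [set C | components F C /\ C `&` bdry Ux !=set0 /\ C `&` bdry Uy !=set0].
set B := \bigcup_(C in [set C | CC C /\ C `&` P0 = set0]) C.
have cM : closed M by exact: open_closedC.
have cF : closed F by apply: open_closedC; exact: openU.
have My : M y by move=> Uxy; have : (Ux `&` Uy) y by []; rewrite dU.
have cB : closed B.
  apply: closed_bigcup.
    by apply: sub_finite_set fin => C [].
  by move=> C [[[z [Fz ->]] _] _]; exact: component_closed.
have dB : P0 `&` B = set0.
  apply/seteqP; split => // p [P0p [C [_ CP] Cp]].
  by have : (C `&` P0) p by []; rewrite CP.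
have [Y [oY Yy cMY dMY]] := quasi_comp hK Kcpt cM My cB dB.
apply: hy; exists (Uy `&` Y), P0; split.
- exact: openI.
- split; first by exists y; exact: connected_component_refl.
  split; last exact: component_connected.
  apply: (subclosed_compact _ Kcpt) => //; exact: component_closed.
- by split.
- move=> z [Uyz Yz]; apply: contrapT => nP0z.
  have Mz : M z by move=> Uxz; have : (Ux `&` Uy) z by []; rewrite dU.
  set Z := connected_component M z.
  have [c [Zc clc]] := @bump K hK Kcpt setT M x z Kconn cM (subsetT M) (I : [set: K] x)
     (fun h => h Uxx) Mz.
  have clUxc : closure Ux c.
    apply: (closureS _ clc) => q [_ nnq]; exact: contrapT.
  have Mc : M c by exact: (connected_component_sub Zc).
  have nUyc : ~ Uy c.
    move=> Uyc; have [q [Uxq Uyq]] := clUxc Uy (open_nbhs_nbhs (conj oUy Uyc)).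
    by have : (Ux `&` Uy) q by []; rewrite dU.
  have Fc : F c by case.
  have Zconn : connected Z by exact: component_connected.
  have ZM : Z `<=` M by exact: connected_component_sub.
  have cZF : closed (Z `&` F) by apply: closedI => //; exact: component_closed.
  have Zz : Z z by exact: connected_component_refl.
  have [d [dcomp dcl]] := @bump K hK Kcpt Z (Z `&` F) z c Zconn cZF (fun q => @proj1 _ _)
     Zz (fun h => h.2 (or_intror Uyz)) (conj Zc Fc).
  set Cc := connected_component F c.
  have sub1 : connected_component (Z `&` F) c `<=` Cc.
    apply: connected_component_max.
    - exact: connected_component_refl.
    - by move=> q /connected_component_sub [].
    - exact: component_connected.
  have Ccd : Cc d by exact: sub1.
  have Fd : F d by exact: (connected_component_sub Ccd).
  have clUyd : closure Uy d.
    apply: (closureS _ dcl) => q [Zq nZFq].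
    have Mq := ZM _ Zq.
    apply: contrapT => nUyq; apply: nZFq; split => //; by case.
  have CCc : CC Cc.
    split; first by exists c.
    split.
      exists c; split; first exact: connected_component_refl.
      split => // intc; exact: (Mc (interior_subset intc)).
    exists d; split => //; split => // intd.
    by apply: Fd; right; exact: interior_subset.
  have CcZ : Cc `<=` Z.
    rewrite /Z (same_connected_component Zc).
    apply: connected_component_max.
    - exact: connected_component_refl.
    - by move=> q Fq Uxq; apply: (connected_component_sub Fq); left.
    - exact: component_connected.
  have CcP0 : Cc `&` P0 = set0.
    apply/seteqP; split => // w [Ccw P0w]; apply: nP0z.
    apply: (connected_component_trans P0w).
    exact/connected_component_sym/CcZ.
  have Bc : B c by exists Cc => //; exact: connected_component_refl.
  have ZMY : Z `&` (M `&` Y) = Z.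
    apply: Zconn.
    - by exists z.
    - exists Y => //; apply/seteqP; split => q; first by case=> ? [].
      by move=> [Zq Yq]; split => //; split => //; exact: ZM.
    - by exists (M `&` Y).
  have [_ [Mc2 Yc]] : (Z `&` (M `&` Y)) c by rewrite ZMY.
  have : (M `&` Y `&` B) c by [].
  by rewrite dMY.
- by move=> q P0q qx; apply: (connected_component_sub P0q); rewrite qx.
Qed.
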